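(* Assume the setting and the CRAIG recurrence described in the context, and let $k\ge 1$ be an index for which $u^{(k)},p^{(k)}$ are defined. Then $p^{(k)}$ coincides with the $k$-th iterate of the conjugate gradient method, started from the zero initial guess and preconditioned with $N$, applied to the Schur-complement equation $Sp=-b$, where $S=A^TM^{-1}A+C$. That is, $p^{(k)}$ is the unique vector $p\in\mathcal{K}_k:=\operatorname{span}\{N^{-1}b,(N^{-1}S)N^{-1}b,\dots,(N^{-1}S)^{k-1}N^{-1}b\}$ such that $(-b-Sp)^Tx=0$ for all $x\in\mathcal{K}_k$ (equivalently, $p^{(k)}$ minimizes $\|p_*-p\|_S=((p_*-p)^TS(p_*-p))^{1/2}$ over $p\in\mathcal{K}_k$, where $p_*$ solves $Sp_*=-b$). Moreover, $u^{(k)}=-M^{-1}Ap^{(k)}$.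
   Context: Setting: $M\in\mathbb{R}^{m\times m}$ is symmetric positive definite, $A\in\mathbb{R}^{m\times n}$ ($n\le m$) has full column rank, $C\in\mathbb{R}^{n\times n}$ is symmetric positive semidefinite, $b\in\mathbb{R}^n$ is nonzero, and $N\in\mathbb{R}^{n\times n}$ is symmetric positive definite (the preconditioner). For a symmetric positive definite $G$ write $\|x\|_G=(x^TGx)^{1/2}$. The generalized saddle point system is $Mu+Ap=0$, $A^Tu-Cp=b$, with unique solution $(u_*,p_* )$; $S=A^TM^{-1}A+C$. CRAIG recurrence (exact arithmetic): Initialization: $\beta_1=\|b\|_{N^{-1}}$, $q_1=N^{-1}b/\beta_1$, $r_1=q_1$, $w_1=M^{-1}Aq_1$, $s_1=Cr_1$, $\alpha_1=(w_1^TMw_1+r_1^Ts_1)^{1/2}$, $v_1=w_1/\alpha_1$, $t_1=s_1/\alpha_1$, $\zeta_1=\beta_1/\alpha_1$, $u^{(1)}=\zeta_1v_1$, $p^{(1)}=-(\zeta_1/\alpha_1)r_1$. For $k=1,2,\dots$: $g_k=N^{-1}(A^Tv_k+t_k)-\alpha_kq_k$, $\beta_{k+1}=\|g_k\|_N$; if $\beta_{k+1}=0$ the recurrence stops; otherwise $q_{k+1}=g_k/\beta_{k+1}$, $w_{k+1}=M^{-1}Aq_{k+1}-\beta_{k+1}v_k$, $r_{k+1}=q_{k+1}-(\beta_{k+1}/\alpha_k)r_k$, $s_{k+1}=Cr_{k+1}$, $\alpha_{k+1}=(w_{k+1}^TMw_{k+1}+r_{k+1}^Ts_{k+1})^{1/2}$,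 $v_{k+1}=w_{k+1}/\alpha_{k+1}$, $t_{k+1}=s_{k+1}/\alpha_{k+1}$, $\zeta_{k+1}=-(\beta_{k+1}/\alpha_{k+1})\zeta_k$, $u^{(k+1)}=u^{(k)}+\zeta_{k+1}v_{k+1}$, $p^{(k+1)}=p^{(k)}-(\zeta_{k+1}/\alpha_{k+1})r_{k+1}$. *)

(* Defs.v *)
(* matrices over an abstract real closed field R (needs Num.sqrt). *)
From HB Require Import structures.
From mathcomp Require Import all_boot all_order all_algebra.
Set Implicit Arguments. Unset Strict Implicit. Unset Printing Implicit Defensive.
Import Order.TTheory GRing.Theory Num.Theory.
Local Open Scope ring_scope.

Section Craig.
Variable R : rcfType.

Definition bform (k : nat) (G : 'M[R]_k) (x y : 'cV[R]_k) : R :=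
  (x^T *m G *m y) 0 0.

Definition gnorm (k : nat) (G : 'M[R]_k) (x : 'cV[R]_k) : R :=
  Num.sqrt (bform G x x).

Definition sym_mx (k : nat) (G : 'M[R]_k) : Prop := G^T = G.

Definition spd (k : nat) (G : 'M[R]_k) : Prop :=
  sym_mx G /\ forall x : 'cV[R]_k, x != 0 -> 0 < bform G x x.

Definition spsd (k : nat) (G : 'M[R]_k) : Prop :=
  sym_mx G /\ forall x : 'cV[R]_k, 0 <= bform G x x.

Variables (m n : nat).

Record craig_state := CraigState {
  cs_q : 'cV[R]_n; cs_v : 'cV[R]_m; cs_t : 'cV[R]_n; cs_r : 'cV[R]_n;
  cs_alpha : R; cs_zeta : R; cs_u : 'cV[R]_m; cs_p : 'cV[R]_n; cs_beta : R }.

Variables (M : 'M[R]_m) (A : 'M[R]_(m, n)) (C N : 'M[R]_n) (b : 'cV[R]_n).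

Definition craig_init : craig_state :=
  let beta1 := gnorm (invmx N) b in
  let q1 := beta1^-1 *: (invmx N *m b) in
  let r1 := q1 in
  let w1 := invmx M *m (A *m q1) in
  let s1 := C *m r1 in
  let alpha1 := Num.sqrt (bform M w1 w1 + (r1^T *m s1) 0 0) in
  let v1 := alpha1^-1 *: w1 in
  let t1 := alpha1^-1 *: s1 in
  let zeta1 := beta1 / alpha1 in
  CraigState q1 v1 t1 r1 alpha1 zeta1 (zeta1 *: v1) (- (zeta1 / alpha1) *: r1) beta1.

Definition craig_step (st : craig_state) : craig_state :=
  let g := invmx N *m (A^T *m cs_v st + cs_t st) - cs_alpha st *: cs_q st in
  let beta' := gnorm N g in
  let q' := beta'^-1 *: g in
  let w' := invmx M *m (A *m q') - beta' *: cs_v st in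
  let r' := q' - (beta' / cs_alpha st) *: cs_r st in
  let s' := C *m r' in
  let alpha' := Num.sqrt (bform M w' w' + (r'^T *m s') 0 0) in
  let v' := alpha'^-1 *: w' in
  let t' := alpha'^-1 *: s' in
  let zeta' := - (beta' / alpha') * cs_zeta st in
  CraigState q' v' t' r' alpha' zeta' (cs_u st + zeta' *: v')
             (cs_p st - (zeta' / alpha') *: r') beta'.

(* craig k = state at index k, for k >= 1 (craig 0 is unused and equals craig 1) *)
Definition craig (k : nat) : craig_state := iter k.-1 craig_step craig_init.

(* u^(k), p^(k) are defined: the recurrence has not stopped before index k,
   i.e. beta_j <> 0 for 2 <= j <= k. *)
Definition craig_defined (k : nat) : Prop :=
  (1 <= k)%N /\ forall j, (2 <= j <= k)%N -> cs_beta (craig j) != 0.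

Definition schur : 'M[R]_n := A^T *m invmx M *m A + C.

Definition krylov_vec (i : nat) : 'cV[R]_n :=
  iter i (fun x => invmx N *m (schur *m x)) (invmx N *m b).

Definition in_krylov (k : nat) (x : 'cV[R]_n) : Prop :=
  exists c : 'I_k -> R, x = \sum_(i < k) c i *: krylov_vec i.

End Craig.

(* Main.v *)
Require Import Defs.
From HB Require Import structures.
From mathcomp Require Import all_boot all_order all_algebra.
Import Order.TTheory GRing.Theory Num.Theory.
Local Open Scope ring_scope.
Set Implicit Arguments. Unset Strict Implicit. Unset Printing Implicit Defensive.

Section Basic.
Variable R : rcfType.
Variable k : nat.
Implicit Types (G B : 'M[R]_k) (x y z : 'cV[R]_k) (a : R).

Lemma bform_addr G x y z : bform G x (y + z) = bform G x y + bform G x z.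
Proof. by rewrite /bform mulmxDr mxE. Qed.
Lemma bform_addl G x y z : bform G (x + y) z = bform G x z + bform G y z.
Proof. by rewrite /bform linearD /= !mulmxDl mxE. Qed.
Lemma bform_scaler G x y a : bform G x (a *: y) = a * bform G x y.
Proof. by rewrite /bform -scalemxAr mxE. Qed.
Lemma bform_scalel G x y a : bform G (a *: x) y = a * bform G x y.
Proof. by rewrite /bform linearZ /= -!scalemxAl mxE. Qed.
Lemma bform_oppr G x y : bform G x (- y) = - bform G x y.
Proof. by rewrite -scaleN1r bform_scaler mulN1r. Qed.
Lemma bform_oppl G x y : bform G (- x) y = - bform G x y.
Proof. by rewrite -scaleN1r bform_scalel mulN1r. Qed.
Lemma bform_subr G x y z : bform G x (y - z) = bform G x y - bform G x z.
Proof. by rewrite bform_addr bform_oppr. Qed.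
Lemma bform_subl G x y z : bform G (x - y) z = bform G x z - bform G y z.
Proof. by rewrite bform_addl bform_oppl. Qed.
Lemma bform0r G x : bform G x 0 = 0.
Proof. by rewrite /bform mulmx0 mxE. Qed.
Lemma bform0l G x : bform G 0 x = 0.
Proof. by rewrite /bform linear0 !mul0mx mxE. Qed.
Lemma bform_trans G x y : bform G x y = bform G^T y x.
Proof.
rewrite /bform; have -> : forall Mx : 'M[R]_1, Mx 0 0 = Mx^T 0 0 by move=> Mx; rewrite mxE.
by rewrite !trmx_mul trmxK mulmxA.
Qed.
Lemma bform_sym G x y : sym_mx G -> bform G x y = bform G y x.
Proof. by move=> hG; rewrite bform_trans hG. Qed.
Lemma bform_mulr G B x y : bform G x (B *m y) = bform (G *m B) x y.
Proof. by rewrite /bform !mulmxA. Qed.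
Lemma bform_mull G B x y : bform G (B *m x) y = bform (B^T *m G) x y.
Proof. by rewrite /bform trmx_mul !mulmxA. Qed.

Lemma spd_unit G : spd G -> G \in unitmx.
Proof.
case=> hs hp; rewrite unitmxE unitfE; apply/negP => /det0P [v v0 hv].
have v0' : v^T != 0 by rewrite -(inj_eq (@trmx_inj _ _ _)) trmx0 trmxK.
have := hp (v^T) v0'.
by rewrite /bform trmxK hv mul0mx mxE ltxx.
Qed.

Lemma spd_pos G x : spd G -> x != 0 -> 0 < bform G x x.
Proof. by case=> _ h; apply: h. Qed.

Lemma spd_ge0 G x : spd G -> 0 <= bform G x x.
Proof.
move=> hG; have [->|x0] := eqVneq x 0; first by rewrite bform0r.
exact/ltW/spd_pos.
Qed.

Lemma sym_inv G : sym_mx G -> sym_mx (invmx G).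
Proof. by rewrite /sym_mx trmx_inv => ->. Qed.

Lemma bform_inv G x y : sym_mx G -> G \in unitmx ->
  bform G (invmx G *m x) (invmx G *m y) = bform (invmx G) x y.
Proof.
move=> hs hu; rewrite bform_mulr bform_mull mulmxV // mulmx1.
by rewrite trmx_inv hs.
Qed.

Lemma spd_inv G : spd G -> spd (invmx G).
Proof.
move=> hG; have hu := spd_unit hG; case: (hG) => hs _.
split; first exact: sym_inv.
move=> x x0; rewrite -bform_inv //; apply: spd_pos => //.
apply: contra x0 => /eqP h; apply/eqP.
by rewrite -(mulKVmx hu x) h mulmx0.
Qed.

Lemma spd_eq0 G x : spd G -> bform G x x = 0 -> x = 0.
Proof.
move=> hG h; apply/eqP; apply/negPn/negP => x0.
by have := spd_pos hG x0; rewrite h ltxx.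
Qed.

Lemma gnorm_sq G x : spd G -> Defs.gnorm G x ^+ 2 = bform G x x.
Proof. by move=> hG; rewrite /Defs.gnorm sqr_sqrtr // spd_ge0. Qed.

Lemma gnorm_eq0 G x : spd G -> (Defs.gnorm G x == 0) = (x == 0).
Proof.
move=> hG; rewrite /Defs.gnorm sqrtr_eq0; apply/idP/idP.
  by move=> h; apply/eqP/(spd_eq0 hG)/eqP; rewrite eq_le h spd_ge0.
by move/eqP->; rewrite bform0r.
Qed.

End Basic.

Section Span.
Variable R : rcfType.
Variable n : nat.
Implicit Types (f g : nat -> 'cV[R]_n) (x y : 'cV[R]_n) (a : R).

Definition span f (j : nat) x : Prop :=
  exists c : nat -> R, x = \sum_(i < j) c i *: f i.

Lemma span0 f j : span f j 0.
Proof. by exists (fun _ => 0); rewrite big1 // => i _; rewrite scale0r. Qed.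

Lemma spanD f j x y : span f j x -> span f j y -> span f j (x + y).
Proof.
move=> [c1 ->] [c2 ->]; exists (fun i => c1 i + c2 i).
by rewrite -big_split; apply: eq_bigr => i _; rewrite scalerDl.
Qed.

Lemma spanZ f j a x : span f j x -> span f j (a *: x).
Proof.
move=> [c ->]; exists (fun i => a * c i).
by rewrite scaler_sumr; apply: eq_bigr => i _; rewrite scalerA.
Qed.

Lemma spanN f j x : span f j x -> span f j (- x).
Proof. by move=> h; rewrite -scaleN1r; apply: spanZ. Qed.

Lemma spanB f j x y : span f j x -> span f j y -> span f j (x - y).
Proof. by move=> h1 h2; apply: spanD => //; apply: spanN. Qed.

Lemma span_elem f j i : (i < j)%N -> span f j (f i).
Proof.
move=> h; exists (fun l => (l == i)%:R).
rewrite (bigD1 (Ordinal h)) //= eqxx scale1r big1 ?addr0 // => l hl.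
have -> : (nat_of_ord l == i) = false.
  by apply/negbTE; apply: contra hl => /eqP e; apply/eqP/val_inj.
by rewrite scale0r.
Qed.

Lemma span_sum f j (I : Type) (r : seq I) (P : pred I) (F : I -> 'cV[R]_n) :
  (forall i, P i -> span f j (F i)) -> span f j (\sum_(i <- r | P i) F i).
Proof. by move=> h; apply: big_ind => //; [apply: span0 | apply: spanD]. Qed.

Lemma span_map f g j j' (B : 'M[R]_n) x :
  (forall i, (i < j)%N -> span g j' (B *m f i)) -> span f j x -> span g j' (B *m x).
Proof.
move=> h [c ->]; rewrite mulmx_sumr; apply: span_sum => i _.
by rewrite -scalemxAr; apply: spanZ; apply: h.
Qed.

Lemma span_sub f g j j' x :
  (forall i, (i < j)%N -> span g j' (f i)) -> span f j x -> span g j' x.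
Proof.
move=> h hx; rewrite -(mul1mx x); apply: (span_map (f:=f)) hx => i hi.
by rewrite mul1mx; apply: h.
Qed.

Lemma span_mono f j j' x : (j <= j')%N -> span f j x -> span f j' x.
Proof.
move=> hj; apply: span_sub => i hi; apply: span_elem.
exact: leq_trans hi hj.
Qed.

Lemma span_orth f j (G : 'M[R]_n) y x :
  (forall i, (i < j)%N -> bform G y (f i) = 0) -> span f j x -> bform G y x = 0.
Proof.
move=> h [c ->]; apply: (big_ind (fun z => bform G y z = 0)).
- exact: bform0r.
- by move=> u v hu hv; rewrite bform_addr hu hv addr0.
- by move=> i _; rewrite bform_scaler h // mulr0.
Qed.

End Span.

Section Main.
Variable R : rcfType.
Variables m n : nat.
Variables (M : 'M[R]_m) (A : 'M[R]_(m, n)) (C N : 'M[R]_n) (b : 'cV[R]_n).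
Hypothesis hM : spd M.
Hypothesis hA : \rank A = n.
Hypothesis hC : spsd C.
Hypothesis hN : spd N.
Hypothesis hb : b != 0.
Implicit Types (x y r : 'cV[R]_n).

Local Notation S := (schur M A C).
Local Notation Tm := (invmx N *m schur M A C).
Local Notation st j := (craig M A C N b j).

Definition Gv (s : craig_state R m n) : 'cV[R]_n :=
  invmx N *m (A^T *m cs_v s + cs_t s) - cs_alpha s *: cs_q s.

Lemma st_step j : (1 <= j)%N -> st j.+1 = craig_step M A C N (st j).
Proof. by case: j => // j _; rewrite /craig /= iterS. Qed.

Lemma st_1 : st 1 = craig_init M A C N b.
Proof. by []. Qed.

Lemma M_unit : M \in unitmx.
Proof. exact: spd_unit. Qed.
Lemma N_unit : N \in unitmx.
Proof. exact: spd_unit. Qed.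
Lemma M_sym : sym_mx M. Proof. by case: hM. Qed.
Lemma N_sym : sym_mx N. Proof. by case: hN. Qed.
Lemma C_sym : sym_mx C. Proof. by case: hC. Qed.

Lemma bform_addG k (G1 G2 : 'M[R]_k) (x y : 'cV[R]_k) :
  bform (G1 + G2) x y = bform G1 x y + bform G2 x y.
Proof. by rewrite /bform mulmxDr mulmxDl mxE. Qed.

Lemma S_sym : sym_mx S.
Proof.
rewrite /sym_mx /schur linearD /= !trmx_mul trmxK trmx_inv M_sym C_sym.
by rewrite mulmxA.
Qed.

Lemma Ax_neq0 x : x != 0 -> A *m x != 0.
Proof.
move=> x0; apply: contra x0 => /eqP h.
have rf : row_free A^T by rewrite /row_free mxrank_tr hA.
rewrite -(inj_eq (@trmx_inj _ _ _)) trmx0 -(mulmx_free_eq0 _ rf) -trmx_mul h.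
by rewrite trmx0.
Qed.

Lemma bform_S x y : bform S x y = bform (invmx M) (A *m x) (A *m y) + bform C x y.
Proof. by rewrite /schur bform_addG /bform trmx_mul !mulmxA. Qed.

Lemma S_spd : spd S.
Proof.
split; first exact: S_sym.
move=> x x0; rewrite bform_S.
have h1 := spd_pos (spd_inv hM) (Ax_neq0 x0).
case: hC => _ h2; exact: ltr_wpDr (h2 x) h1.
Qed.

Lemma bform_T x y : bform N (Tm *m x) y = bform S x y.
Proof.
rewrite bform_mull trmx_mul trmx_inv N_sym S_sym -mulmxA mulVmx ?mulmx1 //.
exact: N_unit.
Qed.

Lemma NT x : N *m (Tm *m x) = S *m x.
Proof. by rewrite !mulmxA mulmxV ?mul1mx //; exact: N_unit. Qed.

Lemma trNx y x : ((N *m y)^T *m x) 0 0 = bform N y x.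
Proof. by rewrite trmx_mul N_sym. Qed.

Lemma alpha_eq r :
  bform M (invmx M *m (A *m r)) (invmx M *m (A *m r)) + (r^T *m (C *m r)) 0 0
  = bform S r r.
Proof.
rewrite bform_inv; [|exact: M_sym|exact: M_unit].
by rewrite bform_S /bform !mulmxA.
Qed.

Definition basic_inv (s : craig_state R m n) : Prop :=
  [/\ cs_v s = (cs_alpha s)^-1 *: (invmx M *m (A *m cs_r s)),
      cs_t s = (cs_alpha s)^-1 *: (C *m cs_r s),
      cs_alpha s = Num.sqrt (bform S (cs_r s) (cs_r s)) &
      cs_u s = - (invmx M *m (A *m cs_p s))].

Lemma basic_init : basic_inv (craig_init M A C N b).
Proof.
rewrite /basic_inv /craig_init /= alpha_eq; split => //.
by rewrite ?mulmxN ?opprK -!scalemxAr ?scaleNr ?opprK scalerA.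
Qed.

Lemma basic_step s : basic_inv s -> basic_inv (craig_step M A C N s).
Proof.
case=> hv ht ha hu; rewrite /basic_inv /craig_step /=.
set g := invmx N *m _ - _.
set be := Defs.gnorm N g.
set q' := be^-1 *: g.
set r' := q' - (be / cs_alpha s) *: cs_r s.
have hw : invmx M *m (A *m q') - be *: cs_v s = invmx M *m (A *m r').
  by rewrite /r' hv scalerA mulmxBr mulmxBr -!scalemxAr.
rewrite hw alpha_eq; split => //.
clearbody r'; by rewrite hu !mulmxBr -!scalemxAr scalerA opprB addrC.
Qed.

Lemma basic_all j : basic_inv (st j).
Proof.
elim: j => [|j IH]; first exact: basic_init.
case: j IH => [|j] IH; first exact: basic_init.
by rewrite st_step //; apply: basic_step.
Qed.

Lemma G_eq s : basic_inv s ->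
  Gv s = (cs_alpha s)^-1 *: (Tm *m cs_r s) - cs_alpha s *: cs_q s.
Proof.
case=> hv ht _ _; rewrite /Gv hv ht -!scalemxAr -scalerDr -scalemxAr.
by congr (_ *: _ - _); rewrite /schur -mulmxA mulmxDl !mulmxA.
Qed.


Local Notation q j := (cs_q (st j)).
Local Notation r j := (cs_r (st j)).
Local Notation al j := (cs_alpha (st j)).
Local Notation be j := (cs_beta (st j)).
Local Notation ze j := (cs_zeta (st j)).
Local Notation p j := (cs_p (st j)).
Local Notation GG j := (Gv (st j)).
Local Notation kv := (krylov_vec M A C N b).
Local Notation Qs := (span (fun i => q i.+1)).
Local Notation Ks := (span kv).

Lemma rec_q j : (1 <= j)%N -> q j.+1 = (be j.+1)^-1 *: GG j.
Proof. by move=> h; rewrite st_step. Qed.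
Lemma rec_be j : (1 <= j)%N -> be j.+1 = Defs.gnorm N (GG j).
Proof. by move=> h; rewrite st_step. Qed.
Lemma rec_r j : (1 <= j)%N -> r j.+1 = q j.+1 - (be j.+1 / al j) *: r j.
Proof. by move=> h; rewrite st_step. Qed.
Lemma rec_ze j : (1 <= j)%N -> ze j.+1 = - (be j.+1 / al j.+1) * ze j.
Proof. by move=> h; rewrite st_step. Qed.
Lemma rec_p j : (1 <= j)%N -> p j.+1 = p j - (ze j.+1 / al j.+1) *: r j.+1.
Proof. by move=> h; rewrite st_step. Qed.
Lemma q1r1 : q 1 = r 1. Proof. by []. Qed.

Lemma GG_eq j : GG j = (al j)^-1 *: (Tm *m r j) - al j *: q j.
Proof. exact: G_eq (basic_all j). Qed.
Lemma al_eq j : al j = Num.sqrt (bform S (r j) (r j)).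
Proof. by case: (basic_all j). Qed.
Lemma al_sq j : al j ^+ 2 = bform S (r j) (r j).
Proof. by rewrite al_eq sqr_sqrtr //; apply: spd_ge0; apply: S_spd. Qed.

Lemma GG_be j : (1 <= j)%N -> be j.+1 != 0 -> GG j = be j.+1 *: q j.+1.
Proof. by move=> h hb'; rewrite rec_q // scalerA mulfV // scale1r. Qed.

Lemma qr_diff j : q j.+2 = r j.+2 + (be j.+2 / al j.+1) *: r j.+1.
Proof. by rewrite rec_r // subrK. Qed.

Lemma r_span j : Qs j.+1 (r j.+1).
Proof.
elim: j => [|j IH]; first by rewrite -q1r1; apply: span_elem.
rewrite rec_r //; apply: spanB; first exact: span_elem.
by apply: spanZ; apply: span_mono IH.
Qed.

Lemma p_span j : Qs j.+1 (p j.+1).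
Proof.
elim: j => [|j IH].
  have -> : p 1 = (- (ze 1 / al 1)) *: r 1 by [].
  by apply: spanZ; apply: r_span.
rewrite rec_p //; apply: spanB; first by apply: span_mono IH.
by apply: spanZ; apply: r_span.
Qed.

Lemma kv_S i : Tm *m kv i = kv i.+1.
Proof. by rewrite /krylov_vec iterS mulmxA. Qed.

Lemma Ks_T j x : Ks j x -> Ks j.+1 (Tm *m x).
Proof.
apply: span_map => i hi; rewrite kv_S; exact: span_elem.
Qed.

Lemma qr_kspan j : Ks j.+1 (q j.+1) /\ Ks j.+1 (r j.+1).
Proof.
elim: j => [|j [IHq IHr]].
  have hq : Ks 1 (q 1).
    have -> : q 1 = (Defs.gnorm (invmx N) b)^-1 *: kv 0 by [].
    by apply: spanZ; apply: span_elem.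
  by split => //; rewrite -q1r1.
have hq : Ks j.+2 (q j.+2).
  rewrite rec_q // GG_eq; apply: spanZ; apply: spanB.
    by apply: spanZ; apply: Ks_T.
  by apply: spanZ; apply: span_mono IHq.
split => //; rewrite rec_r //; apply: spanB => //.
by apply: spanZ; apply: span_mono IHr.
Qed.

Definition Inv (J : nat) : Prop :=
  [/\ forall i l, (i < J)%N -> (l < J)%N -> bform N (q i.+1) (q l.+1) = (i == l)%:R,
      forall i, (i.+1 < J)%N -> bform S (r J) (q i.+1) = 0,
      forall i, (i.+1 < J)%N -> Qs i.+2 (Tm *m q i.+1) &
      forall i, (i < J)%N -> 0 < al i.+1].

Lemma Tspan J j x : Inv J -> (j < J)%N -> Qs j x -> Qs j.+1 (Tm *m x).
Proof.
case=> _ _ hc _ hj; apply: span_map => i hi.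
apply: span_mono (hc i _); first by [].
exact: leq_ltn_trans hi hj.
Qed.

Lemma brq j : Inv j.+1 -> bform S (r j.+1) (q j.+1) = al j.+1 ^+ 2.
Proof.
move=> hI; case: j hI => [|j] hI; first by rewrite -q1r1 al_sq.
case: (hI) => _ hb' _ _.
rewrite qr_diff bform_addr bform_scaler al_sq.
rewrite (span_orth (f := fun i => q i.+1) (j := j.+1) (x := r j.+1)) ?mulr0 ?addr0 //.
exact: r_span.
Qed.

Lemma GO j : Inv j.+1 -> forall i, (i < j.+1)%N -> bform N (GG j.+1) (q i.+1) = 0.
Proof.
move=> hI i hi; case: (hI) => ha hb' _ hd.
rewrite GG_eq bform_subl bform_scalel bform_scalel bform_T.
have alnz : al j.+1 != 0 by rewrite gt_eqF // hd.
move: hi; rewrite ltnS leq_eqVlt => /orP [/eqP ->| hi].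
  rewrite brq // ha // eqxx mulr1 expr2 mulKf //.
  by rewrite subrr.
have hi' : (i < j.+1)%N by apply: ltnW.
by rewrite hb' // ha // (gtn_eqF hi) mulr0 mulr0 subrr.
Qed.

Lemma Tdiff j : Inv j.+1 -> Qs j.+1 (Tm *m q j.+1 - Tm *m r j.+1).
Proof.
move=> hI; case: j hI => [|j] hI; first by rewrite -q1r1 subrr; apply: span0.
rewrite qr_diff mulmxDr addrC addKr -scalemxAr; apply: spanZ.
apply: (Tspan (J := j.+2)) => //; exact: r_span.
Qed.

Lemma Inv_step j : Inv j.+1 -> be j.+2 != 0 -> Inv j.+2.
Proof.
move=> hI bnz; case: (hI) => ha hb' hc hd.
have alnz : al j.+1 != 0 by rewrite gt_eqF // hd.
have h1 : GG j.+1 = be j.+2 *: q j.+2 by apply: GG_be.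
have h2 : forall y, Qs j.+1 y -> bform N (q j.+2) y = 0.
  move=> y; apply: span_orth => i hi.
  by rewrite rec_q // bform_scalel GO // mulr0.
have h3 : bform N (q j.+2) (q j.+2) = 1.
  have e := gnorm_sq (GG j.+1) hN; rewrite -rec_be // in e.
  rewrite rec_q // bform_scalel bform_scaler -e.
  by rewrite mulrA -expr2 -exprMn mulVf // expr1n.
have h4 : Tm *m r j.+1 = (al j.+1 * be j.+2) *: q j.+2 + (al j.+1 ^+ 2) *: q j.+1.
  have e : (al j.+1)^-1 *: (Tm *m r j.+1) = be j.+2 *: q j.+2 + al j.+1 *: q j.+1.
    by rewrite -h1 GG_eq subrK.
  rewrite -[Tm *m r j.+1]scale1r -(mulfV alnz) -[(al j.+1 / al j.+1) *: _]scalerA e.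
  by rewrite scalerDr !scalerA expr2.
have h5 := Tdiff hI.
have hTq : Tm *m q j.+1 = (Tm *m q j.+1 - Tm *m r j.+1) + Tm *m r j.+1.
  by rewrite subrK.
split.
- move=> i l; rewrite ltnS leq_eqVlt => /orP [/eqP ->|hi];
    rewrite ltnS leq_eqVlt => /orP [/eqP ->|hl].
  + by rewrite h3 eqxx.
  + by rewrite h2 ?(gtn_eqF hl) //; apply: span_elem.
  + rewrite bform_sym; last by case: hN.
    by rewrite h2 ?(ltn_eqF hi) //; apply: span_elem.
  + by apply: ha.
- move=> i hi; rewrite rec_r // bform_subl bform_scalel.
  rewrite bform_sym; last exact: S_sym.
  rewrite -bform_T bform_sym; last by case: hN.
  move: hi; rewrite ltnS leq_eqVlt => /orP [/eqP [->]| hi].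
    rewrite hTq bform_addr h2 // add0r h4 bform_addr.
    rewrite (bform_scaler _ _ _ (al j.+1 * be j.+2)) (bform_scaler _ _ _ (al j.+1 ^+ 2)) h3.
    rewrite h2 ?mulr0 ?addr0; last by apply: span_elem.
    rewrite brq // mulr1 expr2 mulrA divfK //.
    by rewrite mulrC subrr.
  rewrite hb' // h2 ?mulr0 ?subrr //.
  by apply: span_mono (hc i hi).
- move=> i hi; move: hi; rewrite ltnS leq_eqVlt => /orP [/eqP [->]| hi].
    rewrite hTq; apply: spanD; first by apply: span_mono h5.
    rewrite h4; apply: spanD; apply: spanZ; apply: span_elem => //.
  by apply: hc.
- move=> i; rewrite ltnS leq_eqVlt => /orP [/eqP ->| hi]; last by apply: hd.
  rewrite al_eq sqrtr_gt0; apply: spd_pos; first exact: S_spd.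
  apply/negP => /eqP hr.
  have : bform N (q j.+2) (r j.+2) = 1.
    rewrite rec_r // bform_subr bform_scaler h3 h2 ?mulr0 ?subr0 //.
    exact: r_span.
  by rewrite hr bform0r => /eqP; rewrite eq_sym oner_eq0.
Qed.

Lemma be1 : be 1 = Defs.gnorm (invmx N) b. Proof. by []. Qed.

Lemma be1_nz : be 1 != 0.
Proof. by rewrite be1 gnorm_eq0 //; apply: spd_inv. Qed.

Lemma q1_def : q 1 = (be 1)^-1 *: (invmx N *m b). Proof. by []. Qed.

Lemma Nq1 : b = be 1 *: (N *m q 1).
Proof.
rewrite q1_def -scalemxAr mulKVmx; last exact: N_unit.
by rewrite scalerA mulfV ?be1_nz // scale1r.
Qed.

Lemma Inv_1 : Inv 1.
Proof.
have h3 : bform N (q 1) (q 1) = 1.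
  rewrite q1_def bform_scalel bform_scaler bform_inv;
    [|by case: hN | exact: N_unit].
  have e := gnorm_sq b (spd_inv hN); rewrite -be1 in e.
  by rewrite -e mulrA -expr2 -exprMn mulVf ?be1_nz // expr1n.
split => //.
- by move=> [|i] [|l] //.
- move=> [|i] // _; rewrite al_eq sqrtr_gt0; apply: spd_pos; first exact: S_spd.
  apply/negP => /eqP hr; move: h3; rewrite q1r1 hr bform0r => /eqP.
  by rewrite eq_sym oner_eq0.
Qed.

Lemma Inv_all k : (forall i, (2 <= i <= k)%N -> be i != 0) ->
  forall j, (j < k)%N -> Inv j.+1.
Proof.
move=> hk; elim => [|j IH] hj; first exact: Inv_1.
apply: Inv_step; first by apply: IH; apply: ltnW.
by apply: hk.
Qed.

Lemma NG j : N *m GG j = (al j)^-1 *: (S *m r j) - al j *: (N *m q j).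
Proof. by rewrite GG_eq mulmxBr -!scalemxAr NT. Qed.

Lemma residual k : (forall i, (2 <= i <= k)%N -> be i != 0) ->
  forall j, (j < k)%N -> - b - S *m p j.+1 = ze j.+1 *: (N *m GG j.+1).
Proof.
move=> hk; have hI := Inv_all hk.
elim => [|j IH] hj.
  have hp : p 1 = (- (ze 1 / al 1)) *: q 1 by [].
  have hz : ze 1 = be 1 / al 1 by [].
  case: (hI 0 hj) => _ _ _ hd.
  have alnz : al 1 != 0 by rewrite gt_eqF // hd.
  rewrite NG -q1r1 hp {1}Nq1.
  move: (ze 1) (al 1) (be 1) hz alnz (q 1) => z a be' -> anz Q.
  by rewrite scalerBr !scalerA -scalemxAr scaleNr opprK divfK // addrC.
have IH' := IH (ltnW hj).
case: (hI j.+1 hj) => _ _ _ hd.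
have alnz : al j.+2 != 0 by rewrite gt_eqF // hd.
have bnz : be j.+2 != 0 by apply: hk.
have e : ze j.+2 * al j.+2 = - (ze j.+1 * be j.+2).
  by rewrite rec_ze // mulrAC mulNr divfK // mulNr mulrC.
rewrite rec_p // mulmxBr opprB addrCA addrC IH' GG_be // NG.
move: (ze j.+2) (al j.+2) (r j.+2) (q j.+2) (ze j.+1) (be j.+2) e => z a R' Q' z1 b1 e.
rewrite -scalemxAr scalerA scalerBr !scalerA -scalemxAr e scaleNr opprK addrC.
by [].
Qed.

Lemma in_krylov_Ks k x : in_krylov M A C N b k x <-> Ks k x.
Proof.
split.
  move=> [c ->]; exists (fun l => oapp c 0 (insub l)).
  by apply: eq_bigr => i _; rewrite valK.
by move=> [c ->]; exists (fun i => c i).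
Qed.

Lemma trSx y x : ((S *m y)^T *m x) 0 0 = bform S y x.
Proof. by rewrite trmx_mul S_sym. Qed.

Lemma opp_sub_sub (V : zmodType) (u v w : V) : (- u - v) - (- u - w) = w - v.
Proof. by rewrite opprB addrC addrA subrK addrC. Qed.

Lemma main k : craig_defined M A C N b k ->
  (forall p0 : 'cV[R]_n,
     (in_krylov M A C N b k p0 /\
      forall x : 'cV[R]_n, in_krylov M A C N b k x ->
        ((- b - S *m p0)^T *m x) 0 0 = 0)
     <-> p0 = p k)
  /\ cs_u (st k) = - (invmx M *m (A *m p k)).
Proof.
case=> hk1 hk; case: k hk1 hk => // k _ hk.
have hI := Inv_all hk (ltnSn k).
have kvQ : forall i, (i < k.+1)%N -> Qs i.+1 (kv i).
  elim => [|i IH] hi.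
    have -> : kv 0 = be 1 *: q 1.
      by rewrite q1_def scalerA mulfV ?be1_nz // scale1r.
    by apply: spanZ; apply: span_elem.
  rewrite -kv_S; apply: (Tspan (J := k.+1)) => //; apply: IH.
  exact: ltnW.
have KQ : forall x, Ks k.+1 x -> Qs k.+1 x.
  move=> x; apply: span_sub => i hi; apply: span_mono (kvQ i hi); exact: hi.
have QK : forall x, Qs k.+1 x -> Ks k.+1 x.
  move=> x; apply: span_sub => i hi; apply: span_mono (qr_kspan i).1; exact: hi.
have pK : Ks k.+1 (p k.+1) by apply: QK; apply: p_span.
have orth : forall x, Ks k.+1 x -> ((- b - S *m p k.+1)^T *m x) 0 0 = 0.
  move=> x hx; rewrite (residual hk (ltnSn k)) linearZ /= -scalemxAl mxE trNx.
  rewrite (span_orth (f := fun i => q i.+1) (j := k.+1) (x := x)) ?mulr0 //.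
    by move=> i hi; apply: GO.
  exact: KQ.
split; last by case: (basic_all k.+1).
move=> p0; split; last first.
  move=> ->; split; first by apply/in_krylov_Ks.
  by move=> x /in_krylov_Ks; apply: orth.
case=> /in_krylov_Ks hp0 ho.
have hd : Ks k.+1 (p0 - p k.+1) by apply: spanB.
have e1 := ho _ (proj2 (in_krylov_Ks _ _) hd).
have e2 := orth _ hd.
have key : bform S (p k.+1 - p0) (p0 - p k.+1) = 0.
  have E : S *m (p k.+1 - p0) = (- b - S *m p0) - (- b - S *m p k.+1).
    by rewrite opp_sub_sub mulmxBr.
  rewrite -trSx E [(_ - _)^T]linearB /= mulmxBl; move: e1 e2.
  by rewrite !mxE => -> ->; rewrite subrr.
apply/eqP; rewrite -subr_eq0; apply/eqP; apply: (spd_eq0 S_spd).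
by rewrite -{1}opprB bform_oppl key oppr0.
Qed.

End Main.

Theorem theorem3p1 (R : rcfType) (m n : nat)
  (M : 'M[R]_m) (A : 'M[R]_(m, n)) (C N : 'M[R]_n) (b : 'cV[R]_n) (k : nat) :
  (n <= m)%N ->
  spd M ->
  \rank A = n ->
  spsd C ->
  b != 0 ->
  spd N ->
  craig_defined M A C N b k ->
  let st := craig M A C N b k in
  (forall p : 'cV[R]_n,
     (in_krylov M A C N b k p /\
      forall x : 'cV[R]_n, in_krylov M A C N b k x ->
        ((- b - schur M A C *m p)^T *m x) 0 0 = 0)
     <-> p = cs_p st)
  /\ cs_u st = - (invmx M *m (A *m cs_p st)).
Proof.
move=> _ hM hA hC hb hN hk st.
exact: (main hM hA hC hN hb hk).
Qed.
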